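(* Let $\gamma$ be a generator of $\mathbb{F}_q^*$, let $f_1,\dots,f_s\in\mathbb{F}_q[x]$ be polynomials of degree at most $d$, and let $M$ be the $s\times s$ matrix over $\mathbb{F}_q(x)$ with $(j,i)$ entry $f_i(\gamma^j x)$ for $j=0,\dots,s-1$, $i=1,\dots,s$. Then: (1) $\det(M)\ne0$ iff $f_1,\dots,f_s$ are linearly independent over the subfield $\mathbb{F}_q(x^{q-1})$ of $\mathbb{F}_q(x)$; (2) if $q-1>d$, then $\det(M)\neq0$ iff $f_1,\dots,f_s$ are linearly independent over $\mathbb{F}_q$.
   Context: $\mathbb{F}_q(x^{q-1})$ denotes the subfield of $\mathbb{F}_q(x)$ consisting of rational functions of the form $u(x^{q-1})$ with $u\in\mathbb{F}_q(x)$. *)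

(* Defs.v *)
From HB Require Import structures.
From mathcomp Require Import all_boot all_order all_algebra.
Set Implicit Arguments. Unset Strict Implicit. Unset Printing Implicit Defensive.
Import Order.TTheory GRing.Theory.
Local Open Scope ring_scope.

Notation ratfun F := {fraction {poly F}}.
Definition polyF (F : fieldType) (p : {poly F}) : ratfun F := FracField.tofrac p.

(* The subfield F_q(x^{q-1}) of F_q(x): rational functions u(x^{q-1}),
   u = p/r in F_q(x), i.e. elements p(x^{q-1}) / r(x^{q-1}) with r <> 0. *)
Definition subfield_xq1 (F : finFieldType) (a : ratfun F) : Prop :=
  exists p r : {poly F}, r != 0 /\
              a = polyF (p \Po 'X^(#|F|.-1)) / polyF (r \Po 'X^(#|F|.-1)).

Definition lin_indep_over_subfield (F : fieldType) (K : ratfun F -> Prop)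
    (s : nat) (f : 'I_s -> {poly F}) : Prop :=
  forall c : 'I_s -> ratfun F, (forall i, K (c i)) ->
    \sum_(i < s) c i * polyF (f i) = 0 -> forall i, c i = 0.

Definition lin_indep_over_base (F : fieldType) (s : nat)
    (f : 'I_s -> {poly F}) : Prop :=
  forall c : 'I_s -> F, \sum_(i < s) c i *: f i = 0 -> forall i, c i = 0.

Definition Mmat (F : fieldType) (gamma : F) (s : nat) (f : 'I_s -> {poly F})
  : 'M[ratfun F]_s :=
  \matrix_(j < s, i < s) polyF ((f i) \Po (gamma ^+ j *: 'X)).

(* Main.v *)
Require Import Defs.
From HB Require Import structures.
From mathcomp Require Import all_boot all_order all_algebra.
Import GRing.Theory.
Local Open Scope ring_scope.

Section FR.
Local Open Scope quotient_scope.
Lemma frac_repr {R : idomainType} (a : {fraction R}) : exists pq : R * R, (pq.2 != 0) && (a == (FracField.tofrac pq.1) / (FracField.tofrac pq.2)).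
Proof.
elim/quotW: a => x. exists (\n_x, \d_x) => /=. rewrite denom_ratioP /=.
have H : (\pi x : {fraction R}) * FracField.tofrac \d_x = FracField.tofrac \n_x.
  rewrite !piE; apply/eqmodP; rewrite /= FracField.equivfE /FracField.mulf.
  by rewrite !numden_Ratio ?mulf_neq0 ?oner_eq0 ?denom_ratioP // !mulr1 mulrC.
by rewrite -H mulfK // tofrac_eq0 denom_ratioP.
Qed.
End FR.


Notation tf := (@FracField.tofrac _).

Lemma coef_compZX (F : fieldType) (c : F) (p : {poly F}) i : (p \Po (c *: 'X))`_i = c^+i * p`_i.
Proof.
have -> : p \Po (c *: 'X) = \poly_(i < size p) (p`_i * c^+i).
  by rewrite comp_polyE poly_def; apply: eq_bigr => j _; rewrite exprZn scalerA.
rewrite coef_poly; case: ltnP => h; first by rewrite mulrC.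
by rewrite nth_default // mulr0.
Qed.

Definition tau {F : fieldType} (c : F) (p : {poly F}) := p \Po (c *: 'X).
Definition nz {F : fieldType} (c : F) := if c == 0 then 1 else c.
Lemma nzE {F : fieldType} (c : F) : c != 0 -> nz c = c.
Proof. by rewrite /nz => /negPf ->. Qed.
Lemma nz_neq0 {F : fieldType} (c : F) : nz c != 0.
Proof. by rewrite /nz; case: ifP => [_|/negbT]; rewrite ?oner_eq0. Qed.

Lemma tau_eq0 {F : fieldType} (c : F) p : c != 0 -> (tau c p == 0) = (p == 0).
Proof. by move=> hc; rewrite /tau comp_poly2_eq0 // size_scale // size_polyX. Qed.
Lemma tauM {F : fieldType} (c : F) p q : tau c (p * q) = tau c p * tau c q.
Proof. exact: comp_polyM. Qed.

Section Sig.
Variables (F : fieldType) (c0 : F).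
Local Notation c := (nz c0).
Let hc : c != 0 := nz_neq0 c0.
Local Notation L := {fraction {poly F}}.
Local Notation tau := (tau c).

Definition sig (a : L) : L :=
  let pq := xchoose (frac_repr a) in tf (tau pq.1) / tf (tau pq.2).

Lemma sigE p r : r != 0 -> sig (tf p / tf r) = tf (tau p) / tf (tau r).
Proof.
move=> hr; rewrite /sig; case/andP: (xchooseP (frac_repr (tf p / tf r))).
set pq := xchoose _ => h2 /eqP h.
move: h; move/eqP; rewrite eqr_div ?tofrac_eq0 // -!tofracM tofrac_eq => /eqP h.
apply/eqP; rewrite eqr_div ?tofrac_eq0 ?(tau_eq0 _ _ hc) // -!tofracM tofrac_eq.
by rewrite -!tauM h.
Qed.

Lemma sig_tf p : sig (tf p) = tf (tau p).
Proof.
by rewrite -[tf p]divr1 -tofrac1 sigE ?oner_eq0 // /tau comp_polyC tofrac1 divr1.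
Qed.

Lemma reprE (a : L) : exists p r, r != 0 /\ a = tf p / tf r.
Proof. by case: (frac_repr a) => [[p r]] /andP[h /eqP->]; exists p, r. Qed.

Lemma sigB : zmod_morphism sig.
Proof.
move=> a b; case: (reprE a) => p [r [hr ->]]; case: (reprE b) => p' [r' [hr' ->]].
have h0 : forall q, q != 0 -> tf q != 0 :> L by move=> q; rewrite tofrac_eq0.
rewrite -mulNr -tofracN addf_div ?h0 // -!tofracM -tofracD sigE ?mulf_neq0 //.
rewrite !sigE ?mulf_neq0 // -mulNr -tofracN addf_div ?h0 ?(tau_eq0 _ _ hc) //.
by rewrite -!tofracM -tofracD /tau !comp_polyM rmorphD !mulNr rmorphN !rmorphM.
Qed.

Lemma sigM : monoid_morphism sig.
Proof.
split; first by rewrite -tofrac1 sig_tf /tau comp_polyC.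
move=> a b; case: (reprE a) => p [r [hr ->]]; case: (reprE b) => p' [r' [hr' ->]].
rewrite mulf_div -!tofracM sigE ?mulf_neq0 // !sigE ?mulf_neq0 //.
by rewrite mulf_div -!tofracM !tauM.
Qed.

HB.instance Definition _ := GRing.isZmodMorphism.Build L L sig sigB.
HB.instance Definition _ := GRing.isMonoidMorphism.Build L L sig sigM.

Lemma iter_sig0 j p : iter j sig (tf p) = tf (p \Po (c ^+ j *: 'X)).
Proof.
elim: j => [|j IH]; first by rewrite expr0 scale1r comp_polyXr.
by rewrite iterS IH sig_tf /tau -comp_polyA comp_polyZ comp_polyX scalerA exprSr.
Qed.
End Sig.

Lemma sigE' {F : fieldType} (c : F) p r : c != 0 -> r != 0 ->
  sig F c (tf p / tf r) = tf (tau c p) / tf (tau c r).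
Proof. by move=> hc hr; rewrite sigE // nzE. Qed.

Lemma iter_sig {F : fieldType} (c : F) j p : c != 0 ->
  iter j (sig F c) (tf p) = tf (p \Po (c ^+ j *: 'X)).
Proof. by move=> hc; rewrite iter_sig0 nzE. Qed.

Section Cas.
Variables (L : fieldType) (s : {rmorphism L -> L}).

Definition CasT {n} (f : 'I_n -> L) : 'M[L]_n := \matrix_(i, j) iter j s (f i).

Lemma casoratian n (f : 'I_n -> L) : \det (CasT f) = 0 ->
  exists c : 'I_n -> L, [/\ forall i, s (c i) = c i, exists i, c i != 0
     & \sum_i c i * f i = 0].
Proof.
elim: n f => [|n IH] f.
  by rewrite det_mx00 => /eqP; rewrite oner_eq0.
move=> hdet.
pose g := fun i : 'I_n => f (widen_ord (leqnSn n) i).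
have [hg|hg] := eqVneq (\det (CasT g)) 0.
  case: (IH g hg) => c' [hs [i0 hi0] hsum].
  have Hins : forall k : 'I_n, (insub (val (widen_ord (leqnSn n) k)) : option 'I_n) = Some k.
    by move=> k; rewrite /= valK.
  exists (fun i : 'I_n.+1 => oapp c' 0 (insub (val i))); split.
  - by move=> i; case: insubP => [k _ _|_] /=; rewrite ?hs ?rmorph0.
  - by exists (widen_ord (leqnSn n) i0); rewrite Hins.
  rewrite big_ord_recr /= insubN ?ltnn // mul0r addr0.
  rewrite -[RHS]hsum; apply: eq_bigr => i _.
  by rewrite Hins.
have /det0P [v v0 hv] : \det (CasT f) == 0 by rewrite hdet.
have E : forall j : 'I_n.+1, \sum_i v 0 i * iter j s (f i) = 0.
  move=> j; have := congr1 (fun A : 'M_(1, n.+1) => A 0 j) hv.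
  by rewrite !mxE; under eq_bigr do rewrite mxE.
have vm0 : v 0 ord_max != 0.
  apply/negP => /eqP vm.
  have : \det (CasT g) == 0.
    apply/det0P; exists (\row_i v 0 (widen_ord (leqnSn n) i)).
      apply: contraNneq v0 => hu; apply/eqP/rowP => i; rewrite mxE.
      have [k ->|->] := unliftP ord_max i; last by [].
      have := congr1 (fun A : 'M_(1, n) => A 0 k) hu; rewrite !mxE.
      by move=> <-; congr (v 0 _); apply: val_inj; rewrite /= /bump leqNgt ltn_ord.
    apply/rowP => j; rewrite !mxE.
    have := E (widen_ord (leqnSn n) j); rewrite big_ord_recr /= vm mul0r addr0.
    by move=> h; rewrite -[X in _ = X]h; apply: eq_bigr => i _; rewrite !mxE.
  by rewrite (negPf hg).
pose w i := v 0 i / v 0 ord_max.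
have Ew : forall j : 'I_n.+1, \sum_i w i * iter j s (f i) = 0.
  move=> j; transitivity ((\sum_i v 0 i * iter j s (f i)) / v 0 ord_max); last first.
    by rewrite E mul0r.
  rewrite mulr_suml.
  by apply: eq_bigr => i _; rewrite /w mulrAC.
have wm : w ord_max = 1 by rewrite /w divff.
have hfix : forall k : 'I_n, s (w (widen_ord (leqnSn n) k)) = w (widen_ord (leqnSn n) k).
  pose u := \row_k (s (w (widen_ord (leqnSn n) k)) - w (widen_ord (leqnSn n) k)).
  suff : u = 0.
    move=> hu k; have := congr1 (fun A : 'M_(1,n) => A 0 k) hu; rewrite !mxE.
    by move/eqP; rewrite subr_eq0 => /eqP.
  apply/eqP; apply: contraT => hu.
  have : \det (map_mx s (CasT g)) == 0.
    apply/det0P; exists u => //; apply/rowP => j; rewrite !mxE.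
    have h1 : \sum_i w i * iter j.+1 s (f i) = 0 := Ew (lift ord0 j).
    have h2 : \sum_i w i * iter j s (f i) = 0 := Ew (widen_ord (leqnSn n) j).
    have h3 : \sum_(i < n.+1) (s (w i) - w i) * iter j.+1 s (f i) = 0.
      rewrite (eq_bigr (fun i => s (w i * iter j s (f i)) - w i * iter j.+1 s (f i))); last first.
        by move=> i _; rewrite mulrBl [in RHS]rmorphM.
      by rewrite sumrB -rmorph_sum h2 h1 rmorph0 subrr.
    move: h3; rewrite big_ord_recr /= wm rmorph1 subrr mul0r addr0 => h3.
    rewrite -[X in _ = X]h3; apply: eq_bigr => k _; rewrite !mxE; done.
  by rewrite det_map_mx fmorph_eq0 (negPf hg).
exists w; split.
- move=> i; have [k ->|->] := unliftP ord_max i; last by rewrite wm rmorph1.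
  rewrite (_ : lift ord_max k = widen_ord (leqnSn n) k) ?hfix //.
  by apply: val_inj; rewrite /= /bump leqNgt ltn_ord.
- by exists ord_max; rewrite wm oner_neq0.
exact: (Ew ord0).
Qed.
End Cas.

Section Blocks.
Variables (F : fieldType) (m s : nat) (f : 'I_s -> {poly F}).
Hypothesis hf : forall i, (size (f i) <= m)%N.

Lemma compXn_dec (p : {poly F}) :
  p \Po 'X^m = (p`_0)%:P + (drop_poly 1 p \Po 'X^m) * 'X^m.
Proof.
rewrite -{1}(poly_take_drop 1 p) comp_polyD comp_polyM expr1 comp_polyX.
congr (_ + _); rewrite (_ : take_poly 1 p = (p`_0)%:P) ?comp_polyC //.
by apply/polyP => i; rewrite coef_take_poly coefC; case: i.
Qed.

Lemma split_step (u : 'I_s -> {poly F}) :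
  \sum_i (u i \Po 'X^m) * f i = 0 ->
  \sum_i (u i)`_0 *: f i = 0 /\ \sum_i (drop_poly 1 (u i) \Po 'X^m) * f i = 0.
Proof.
have -> : \sum_i (u i \Po 'X^m) * f i =
   \sum_i (u i)`_0 *: f i + 'X^m * \sum_i (drop_poly 1 (u i) \Po 'X^m) * f i.
  rewrite mulr_sumr -big_split /=; apply: eq_bigr => i _.
  by rewrite compXn_dec mulrDl mul_polyC mulrA [_ * 'X^m]mulrC.
set A := \sum_i _ *: _; set B := \sum_i _ * _ => hAB.
have hA : A = 0.
  apply/polyP => k; rewrite coef0.
  have [lt_km|le_mk] := ltnP k m.
    by have := congr1 (fun p : {poly F} => p`_k) hAB; rewrite coefD coefXnM lt_km addr0 coef0.
  by rewrite /A coef_sum big1 // => i _; rewrite coefZ (nth_default _ (leq_trans (hf i) le_mk)) mulr0.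
split; first exact: hA.
by move: hAB; rewrite hA add0r => /eqP; rewrite mulf_eq0 -size_poly_eq0 size_polyXn /= => /eqP.
Qed.

Lemma blocks (u : 'I_s -> {poly F}) :
  \sum_i (u i \Po 'X^m) * f i = 0 -> forall k, \sum_i (u i)`_k *: f i = 0.
Proof.
move=> h k; elim: k u h => [|k IH] u h; have [h1 h2] := split_step _ h; first exact: h1.
have := IH _ h2.
by under eq_bigr do rewrite coef_drop_poly addn1.
Qed.
End Blocks.

Section Fin.
Variables (F : finFieldType) (gamma : F).
Hypothesis hgamma : (#|F|.-1).-primitive_root gamma.
Local Notation n := #|F|.-1.
Local Notation sg := (sig F gamma).
Local Notation L := {fraction {poly F}}.

Lemma n_gt0 : (0 < n)%N. Proof. exact: prim_order_gt0 hgamma. Qed.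
Lemma gamma_neq0 : gamma != 0.
Proof. by rewrite (prim_root_eq0 hgamma) -lt0n n_gt0. Qed.

Lemma compXn_eq0 (p : {poly F}) : (p \Po 'X^n == 0) = (p == 0).
Proof. by rewrite comp_poly_eq0 // size_polyXn ltnS n_gt0. Qed.

Lemma Xn_inv (u : {poly F}) : tau gamma (u \Po 'X^n) = u \Po 'X^n.
Proof.
rewrite /tau -comp_polyA; congr (u \Po _).
by rewrite rmorphXn /= comp_polyX exprZn (prim_expr_order hgamma) scale1r.
Qed.

Lemma inv_poly (p : {poly F}) : tau gamma p = p -> exists u, p = u \Po 'X^n.
Proof.
move=> hp; exists (\poly_(i < size p) p`_(i * n)).
apply/polyP => i; rewrite coef_comp_poly_Xn ?n_gt0 // coef_poly.
case: ifP => [/dvdnP [k ->]|ndiv].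
  rewrite mulnK ?n_gt0 //; case: ltnP => // hk.
  rewrite nth_default //; apply: leq_trans hk _.
  by rewrite leq_pmulr ?n_gt0.
have := congr1 (fun q : {poly F} => q`_i) hp; rewrite /tau coef_compZX.
have [->//|pi0] := eqVneq p`_i 0.
move/(canRL (mulfK pi0)); rewrite divff // => /eqP.
by rewrite -(prim_order_dvd hgamma) ndiv.
Qed.

Lemma fixed_K (a : L) : sg a = a <-> subfield_xq1 a.
Proof.
split; last first.
  case=> p [r [hr ->]].
  by rewrite /polyF sigE' ?gamma_neq0 ?compXn_eq0 // !Xn_inv.
move=> ha; case: (@reprE _ a) => p [r [hr Ea]].
pose h k := r \Po (gamma ^+ k *: 'X).
have hn := n_gt0; move: hn; case En : n => [//|m] _.
pose E := \prod_(k < m) h k.+1.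
have h0 : h 0%N = r by rewrite /h expr0 scale1r comp_polyXr.
have hk0 : forall k, h k != 0.
  by move=> k; rewrite /h comp_poly2_eq0 // size_scale ?size_polyX // expf_neq0 // gamma_neq0.
have hE : E != 0 by rewrite prodf_seq_neq0; apply/allP => k _; exact: hk0.
pose D := r * E; pose P := p * E.
have hD : D != 0 by rewrite mulf_neq0.
have EaD : a = tf P / tf D.
  by rewrite Ea /P /D !tofracM -mulf_div divff ?mulr1 // tofrac_eq0.
have tauD : tau gamma D = D.
  rewrite /D /E /tau comp_polyM rmorph_prod /=.
  have -> : r \Po gamma *: 'X = h 1%N by rewrite /h expr1.
  rewrite (eq_bigr (fun k : 'I_m => h k.+2)); last first.
    move=> k _; rewrite /h -comp_polyA comp_polyZ comp_polyX scalerA -exprSr.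
    done.
  have L1 : \prod_(i < m.+1) h i.+1 = h 1%N * \prod_(i < m) h i.+2 by rewrite big_ord_recl.
  have L2 : \prod_(i < m.+1) h i = h 0%N * \prod_(i < m) h i.+1 by rewrite big_ord_recl.
  rewrite -L1 -h0 -L2 big_ord_recr /= [in RHS]big_ord_recl /= mulrC.
  congr (_ * _); by rewrite /h -En (prim_expr_order hgamma).
have tauP : tau gamma P = P.
  move: ha; rewrite EaD sigE' ?gamma_neq0 // tauD.
  move/eqP; rewrite eqr_div ?tofrac_eq0 // -!tofracM tofrac_eq (inj_eq (mulIf hD)).
  by move/eqP.
case: (inv_poly _ tauP) => uP EP; case: (inv_poly _ tauD) => uD ED.
exists uP, uD; split; first by rewrite -compXn_eq0 -ED.
by rewrite EaD {1}EP {1}ED.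
Qed.
End Fin.

Theorem propositionE7 (F : finFieldType) (gamma : F)
  (hgamma : (#|F|.-1).-primitive_root gamma)
  (d s : nat) (f : 'I_s -> {poly F}) (hdeg : forall i, (size (f i) <= d.+1)%N) :
  (\det (Mmat gamma f) != 0 <-> lin_indep_over_subfield (@subfield_xq1 F) f) /\
  ((d < #|F|.-1)%N ->
     (\det (Mmat gamma f) != 0 <-> lin_indep_over_base f)).
Proof.
have gn0 := @gamma_neq0 _ _ hgamma.
have hM : Mmat gamma f = (CasT _ (sig F gamma) (fun i => polyF (f i)))^T.
  by apply/matrixP => j i; rewrite !mxE /polyF (iter_sig _ _ _ gn0).
have hdetE : \det (Mmat gamma f) = \det (CasT _ (sig F gamma) (fun i => polyF (f i))).
  by rewrite hM det_tr.
have iter0 : forall j, iter j (sig F gamma) 0 = 0 by elim => //= j ->; rewrite rmorph0.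
have part1 : \det (Mmat gamma f) != 0 <-> lin_indep_over_subfield (@subfield_xq1 F) f.
  rewrite hdetE; split.
  - move=> hdet c hK hsum i; apply/eqP/negP => ci; move: hdet; apply/negP; rewrite negbK.
    apply/det0P; exists (\row_k c k).
      by apply/eqP => /rowP/(_ i); rewrite !mxE => h; rewrite h eqxx in ci.
    have hfix : forall k, sig F gamma (c k) = c k := fun k => (@fixed_K _ _ hgamma (c k)).2 (hK k).
    have hit : forall j : nat, iter j (sig F gamma) (\sum_k c k * polyF (f k)) =
                  \sum_k c k * iter j (sig F gamma) (polyF (f k)).
      elim => [|j' IH] //=; rewrite IH rmorph_sum; apply: eq_bigr => k _.
      by rewrite rmorphM; congr (_ * _); exact: hfix.
    apply/rowP => j; rewrite !mxE.
    have := hit j; rewrite hsum iter0 => h0; rewrite [RHS]h0.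
    by apply: eq_bigr => k _; rewrite !mxE.
  - move=> hind; apply/eqP => h0; case: (casoratian _ _ _ _ h0) => c [hfix [i ci] hsum].
    have hK : forall k, subfield_xq1 (c k).
      by move=> k; apply/(@fixed_K _ _ hgamma (c k)).1/hfix.
    by move: ci; rewrite (hind c hK hsum i) eqxx.
split => // hd.
have hsz : forall i, (size (f i) <= #|F|.-1)%N by move=> i; exact: leq_trans (hdeg i) hd.
suff : lin_indep_over_subfield (@subfield_xq1 F) f <-> lin_indep_over_base f.
  by move: part1; clear; tauto.
split.
- move=> hK c hs i.
  have h1 : forall k, subfield_xq1 (polyF (c k)%:P).
    move=> k; exists (c k)%:P, 1; split; first exact: oner_neq0.
    by rewrite !comp_polyC /polyF tofrac1 divr1.
  have h2 : \sum_k polyF (c k)%:P * polyF (f k) = 0.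
    rewrite /polyF; under eq_bigr do rewrite -tofracM mul_polyC.
    by rewrite -rmorph_sum hs rmorph0.
  by move: (hK _ h1 h2 i) => /eqP; rewrite /polyF tofrac_eq0 polyC_eq0 => /eqP.
move=> hF C hK hs i.
have : forall k, exists pr : {poly F} * {poly F}, (pr.2 != 0) /\ C k = polyF (pr.1 \Po 'X^(#|F|.-1)) / polyF (pr.2 \Po 'X^(#|F|.-1)).
  by move=> k; case: (hK k) => p [r [hr E]]; exists (p, r).
case/fin_all_exists => pr hpr.
pose R := \prod_k (pr k).2.
pose Q k := (pr k).1 * \prod_(l | l != k) (pr l).2.
have hR : R \Po 'X^(#|F|.-1) != 0.
  rewrite (@compXn_eq0 _ _ hgamma) prodf_seq_neq0; apply/allP => k _.
  exact: (proj1 (hpr k)).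
have hC : forall k, C k * tf (R \Po 'X^(#|F|.-1)) = tf (Q k \Po 'X^(#|F|.-1)).
  move=> k; rewrite /R (bigD1 k) //= /Q !comp_polyM /polyF !tofracM (proj2 (hpr k)).
  rewrite mulrA divfK // tofrac_eq0 (@compXn_eq0 _ _ hgamma); exact: (proj1 (hpr k)).
have hsum : \sum_k (Q k \Po 'X^(#|F|.-1)) * f k = 0.
  apply/eqP; rewrite -tofrac_eq0 rmorph_sum /=.
  under eq_bigr => k _ do rewrite tofracM -hC mulrAC.
  by rewrite -mulr_suml hs mul0r.
have hQ : forall k, Q k = 0.
  move=> k; apply/polyP => e; rewrite coef0.
  exact: (hF (fun l => (Q l)`_e) (@blocks _ _ _ _ hsz _ hsum e) k).
have := hC i; rewrite hQ comp_polyC /polyF tofrac0 => /eqP.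
by rewrite mulf_eq0 tofrac_eq0 (negPf hR) orbF => /eqP.
Qed.
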